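(* Let $A$ be a binary $n\times m$ matrix with $R_{binary}(A)=k$ whose binary base graph has at least two (distinct) sources $U_1$ and $U_2$; regard $U_1$ and $U_2$ as $n\times k$ matrices whose columns are the vectors of the respective bases. Let $d$ be a positive integer and let $A''$ be the block matrix with $d$ block rows obtained by appending to $I_d\otimes A$ (the block-diagonal matrix with $d$ copies of $A$ on the diagonal and zeros elsewhere) the matrix $I_d\otimes (U_1\,|\,U_2)$, i.e. $A''=(I_d\otimes A\;|\;I_d\otimes(U_1|U_2))$, where the $i$-th block row contains $A$ in the $i$-th diagonal block of the first part and $(U_1|U_2)$ in the $i$-th block of the second part. Then $R_{binary}(A'')\ge kd+d$.
   Context: $R_{binary}(M)$ for a binary $p\times q$ matrix $M$ is the least $r$ with $M=UV$, $U\in\{0,1\}^{p\times r}$, $V\in\{0,1\}^{r\times q}$, ordinary arithmetic. A set $X$ of $\{0,1\}$-vectors spans a vector $y$ (binary sense) if $y=\sum_{x\in X}c_xx$ with $c_x\in\{0,1\}$ and ordinary addition; it spans a set $Y$ if it spans each vector in $Y$. A binary base of $A$ is a set of $\{0,1\}$ column vectors spanning every column of $A$, of minimum cardinality among such spanning sets. The binary base graph of $A$ is the directed graph whose vertices are the binary bases of $A$, with an edge from base $U$ to a different base $V$ whenever $U$ spans $V$. A source is a vertex with no incoming edges. $(M|N)$ denotes horizontal concatenation and $\otimes$ the Kronecker product. *)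

(* Defs.v *)
From HB Require Import structures.
From mathcomp Require Import all_boot all_order all_algebra.
Set Implicit Arguments. Unset Strict Implicit. Unset Printing Implicit Defensive.
Import Order.TTheory GRing.Theory Num.Theory.
Local Open Scope ring_scope.

(* A {0,1}-matrix with integer entries (ordinary arithmetic is that of int). *)
Definition is_binary_mx (p q : nat) (M : 'M[int]_(p, q)) : Prop :=
  forall i j, M i j = 0 \/ M i j = 1.

Definition binary_factorizable (p q : nat) (M : 'M[int]_(p, q)) (r : nat) : Prop :=
  exists (U : 'M[int]_(p, r)) (V : 'M[int]_(r, q)),
    [/\ is_binary_mx U, is_binary_mx V & M = U *m V].

Definition is_binary_rank (p q : nat) (M : 'M[int]_(p, q)) (r : nat) : Prop :=
  binary_factorizable M r /\ (forall r', binary_factorizable M r' -> (r <= r')%N).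

(* {0,1}-vectors are represented as boolean column vectors; their integer
   image is used for ordinary arithmetic. *)
Definition intv (n : nat) (x : 'cV[bool]_n) : 'cV[int]_n :=
  map_mx (fun b : bool => (b : nat)%:Z) x.

Definition bspans (n : nat) (X : {set 'cV[bool]_n}) (y : 'cV[int]_n) : Prop :=
  exists2 S : {set 'cV[bool]_n}, S \subset X & \sum_(x in S) intv x = y.

Definition bspans_all_columns (n m : nat) (X : {set 'cV[bool]_n})
    (A : 'M[int]_(n, m)) : Prop :=
  forall j : 'I_m, bspans X (col j A).

Definition bspans_set (n : nat) (X Y : {set 'cV[bool]_n}) : Prop :=
  forall y, y \in Y -> bspans X (intv y).

Definition is_binary_base (n m : nat) (A : 'M[int]_(n, m))
    (X : {set 'cV[bool]_n}) : Prop :=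
  bspans_all_columns X A /\
  (forall Y : {set 'cV[bool]_n}, bspans_all_columns Y A -> (#|X| <= #|Y|)%N).

Definition base_graph_edge (n m : nat) (A : 'M[int]_(n, m))
    (U V : {set 'cV[bool]_n}) : Prop :=
  [/\ is_binary_base A U, is_binary_base A V, U <> V & bspans_set U V].

Definition is_source (n m : nat) (A : 'M[int]_(n, m))
    (U : {set 'cV[bool]_n}) : Prop :=
  is_binary_base A U /\ (forall V, ~ base_graph_edge A V U).

Definition col_set (n k : nat) (U : 'M[bool]_(n, k)) : {set 'cV[bool]_n} :=
  [set col j U | j : 'I_k].

Definition intm (p q : nat) (M : 'M[bool]_(p, q)) : 'M[int]_(p, q) :=
  map_mx (fun b : bool => (b : nat)%:Z) M.

Definition kron_id (d p q : nat) (B : 'M[int]_(p, q))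
    : 'M[int]_(\sum_(i < d) p, \sum_(i < d) q) :=
  \mxblock_(i < d, j < d) (if i == j then B else 0).

Definition Asecond (n m k d : nat) (A : 'M[int]_(n, m)) (U1 U2 : 'M[bool]_(n, k))
    : 'M[int]_(\sum_(i < d) n, \sum_(i < d) m + \sum_(i < d) (k + k)) :=
  row_mx (kron_id d A) (kron_id d (row_mx (intm U1) (intm U2))).

(* Main.v *)
Require Import Defs.
From HB Require Import structures.
From mathcomp Require Import all_boot all_order all_algebra.
From mathcomp Require Import zify.
Set Implicit Arguments. Unset Strict Implicit. Unset Printing Implicit Defensive.
Import Order.TTheory GRing.Theory Num.Theory.
Local Open Scope ring_scope.
Lemma span_img (n : nat) (I : finType) (f : I -> 'cV[bool]_n) (J : {set I})
  (y : 'cV[int]_n) :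
  (forall a, y a 0 <= 1) -> y = \sum_(t in J) intv (f t) -> bspans (f @: J) y.
Proof.
move=> y1 yE; exists (f @: J) => //.
rewrite yE [RHS](partition_big_imset f); apply: eq_bigr => x /imsetP [t0 t0J ->].
apply/matrixP => a b; rewrite (ord1 b) summxE !mxE.
under eq_bigr => t /andP[_ /eqP ->] do rewrite mxE.
rewrite sumr_const.
set c := #|_|.
have c1 : (0 < c)%N by apply/card_gt0P; exists t0; rewrite unfold_in /= t0J eqxx.
case E: (f t0 a 0) => /=; last by rewrite mul0rn.
have := y1 a; rewrite yE summxE (bigID (fun t => f t == f t0)) /=.
under [X in X + _]eq_bigr => t /andP[_ /eqP ->] do rewrite mxE E.
rewrite sumr_const.
have : 0 <= \sum_(i in J | ~~ (f i == f t0)) (intv (f i)) a 0.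
  by apply: sumr_ge0 => t _; rewrite mxE.
rewrite -/c. 
set s := \sum_(i in J | _) _.
move=> s0 H. have : (c <= 1)%N.
  have : (1 *+ c : int) <= 1 by apply: le_trans H; rewrite lerDl.
  by rewrite natz lez_nat.
lia.
Qed.

Lemma span_fact (n m : nat) (A : 'M[int]_(n, m)) (X : {set 'cV[bool]_n}) :
  bspans_all_columns X A -> binary_factorizable A #|X|.
Proof.
move=> HX.
have [S HS] : exists S : 'I_m -> {set 'cV[bool]_n},
    forall c, S c \subset X /\ \sum_(x in S c) intv x = col c A.
  apply: (@fin_all_exists 'I_m (fun _ => {set 'cV[bool]_n})
    (fun c S => S \subset X /\ \sum_(x in S) intv x = col c A)) => c.
  by have [S ? ?] := HX c; exists S.
exists (\matrix_(a < n, j < #|X|) intv (enum_val j) a 0),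
       (\matrix_(j < #|X|, c < m) ((enum_val j \in S c) : nat)%:Z).
split.
- by move=> i j; rewrite !mxE; case: (enum_val j i 0); [right|left].
- by move=> i j; rewrite !mxE; case: (_ \in _); [right|left].
apply/matrixP => a c; rewrite !mxE.
have [Sx HSc] := HS c.
have -> : A a c = col c A a 0 by rewrite mxE.
rewrite -HSc summxE.
under eq_bigr => j _ do rewrite !mxE.
transitivity (\sum_(x in X) intv x a 0 * ((x \in S c) : nat)%:Z); last first.
  rewrite (big_enum_val (A := mem X) (fun x => intv x a 0 * ((x \in S c) : nat)%:Z)).
  by apply: eq_bigr => j _; rewrite !mxE.
rewrite [RHS](big_setID (S c)) /= (setIidPr Sx).
rewrite [X in _ + X]big1 ?addr0; last first.
  by move=> x /setDP [_ /negbTE ->]; rewrite mulr0.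
by apply: eq_bigr => x ->; rewrite /= mulr1 ?mxE.
Qed.

Lemma intv_col (n k : nat) (U : 'M[bool]_(n, k)) j :
  intv (col j U) = col j (intm U).
Proof. by apply/matrixP => a b; rewrite !mxE. Qed.

Lemma block_bound (n m k : nat) (A : 'M[int]_(n, m))
  (U1 U2 : 'M[bool]_(n, k)) :
  is_binary_rank A k ->
  is_source A (col_set U1) ->
  is_source A (col_set U2) ->
  col_set U1 <> col_set U2 ->
  forall W : {set 'cV[bool]_n},
  bspans_all_columns W A -> (forall j, bspans W (col j (intm U1))) ->
  (forall j, bspans W (col j (intm U2))) -> (k < #|W|)%N.
Proof.
move=> [_ rmin] [b1 s1] [b2 s2] ne12 W HA HB1 HB2.
rewrite ltnNge; apply/negP => Wk.
have cU1 : (k <= #|col_set U1|)%N by apply: rmin; apply: span_fact; case: b1.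
have baseW : is_binary_base A W.
  split=> // Y HY; apply: (leq_trans Wk); apply: (leq_trans cU1).
  by case: b1 => _; apply.
have E : forall U : 'M[bool]_(n, k), is_binary_base A (col_set U) ->
    (forall V, ~ base_graph_edge A V (col_set U)) ->
    (forall j, bspans W (col j (intm U))) -> W = col_set U.
  move=> U bU sU HU; case: (eqVneq W (col_set U)) => // neq; exfalso.
  apply: (sU W); split => //; first exact/eqP.
  by move=> y /imsetP [j _ ->]; rewrite intv_col.
by apply: ne12; rewrite -(E U1) // -(E U2).
Qed.

Definition RR (d n : nat) (i : 'I_d) (a : 'I_n) : 'I_(\sum_(i < d) n) :=
  @tagnat.Rank d (fun _ => n) i a.

Lemma sig1RR d n i a : @tagnat.sig1 d (fun _ => n) (@RR d n i a) = i.
Proof. exact: tagnat.Rank1K. Qed.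

Lemma sig2RR d n i a : (@tagnat.sig2 d (fun _ => n) (@RR d n i a) : 'I_n) = a.
Proof. by apply/val_inj; rewrite /RR tagnat.Rank2K. Qed.

Lemma kron_idE d p q (B : 'M[int]_(p, q)) i a j c :
  kron_id d B (RR i a) (RR j c) = if i == j then B a c else 0.
Proof.
rewrite /kron_id mxE !sig1RR.
case: eqP => _; rewrite ?mxE; last by [].
by rewrite !sig2RR.
Qed.

Lemma AsE1 d n m k A U1 U2 (i : 'I_d) (a : 'I_n) j (c : 'I_m) :
  @Asecond n m k d A U1 U2 (RR i a) (lshift _ (RR j c)) = if i == j then A a c else 0.
Proof. by rewrite /Asecond row_mxEl kron_idE. Qed.

Lemma AsE2 d n m k A U1 U2 (i : 'I_d) (a : 'I_n) j (c : 'I_(k + k)) :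
  @Asecond n m k d A U1 U2 (RR i a) (rshift _ (RR j c)) =
  if i == j then row_mx (intm U1) (intm U2) a c else 0.
Proof. by rewrite /Asecond row_mxEr kron_idE. Qed.

Definition blk d m k (g : 'I_(\sum_(i < d) m + \sum_(i < d) (k + k))) : 'I_d :=
  match split g with
  | inl g1 => @tagnat.sig1 d (fun _ => m) g1
  | inr g2 => @tagnat.sig1 d (fun _ => (k + k)%N) g2
  end.

Lemma offblk d n m k A U1 U2 (i : 'I_d) (a : 'I_n) g :
  @Asecond n m k d A U1 U2 (RR i a) g != 0 -> blk g = i.
Proof.
rewrite -[g]splitK /blk unsplitK; case: (split g) => g1 /=.
  have -> : g1 = RR (@tagnat.sig1 d (fun _ => m) g1) (tagnat.sig2 g1).
    by rewrite /RR tagnat.sig2K.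
  by rewrite AsE1 sig1RR; case: (i =P _) => [-> //|_]; rewrite eqxx.
have -> : g1 = RR (@tagnat.sig1 d (fun _ => (k + k)%N) g1) (tagnat.sig2 g1).
  by rewrite /RR tagnat.sig2K.
by rewrite AsE2 sig1RR; case: (i =P _) => [-> //|_]; rewrite eqxx.
Qed.

Theorem mainTheorem14 (n m k d : nat) (A : 'M[int]_(n, m))
  (U1 U2 : 'M[bool]_(n, k)) :
  is_binary_mx A ->
  is_binary_rank A k ->
  is_source A (col_set U1) ->
  is_source A (col_set U2) ->
  col_set U1 <> col_set U2 ->
  (0 < d)%N ->
  forall r : nat, binary_factorizable (Asecond d A U1 U2) r -> (k * d + d <= r)%N.
Proof.
move=> Abin Arank s1 s2 ne12 dpos r [U [V [Ubin Vbin E]]].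
set A2 := Asecond d A U1 U2 in E.
have pos : forall rho g t, U rho t = 1 -> V t g = 1 -> A2 rho g != 0.
  move=> rho g t Ut Vt; rewrite E mxE (bigD1 t) //= Ut Vt mul1r.
  have : 0 <= \sum_(s < r | s != t) U rho s * V s g.
    by apply: sumr_ge0 => s _; case: (Ubin rho s) => ->; case: (Vbin s g) => ->.
  set s := \sum_(i < r | i != t) U rho i * V i g; lia.
pose T (i : 'I_d) := [set t : 'I_r | [exists a : 'I_n, U (RR i a) t == 1]
                                   && [exists g, V t g == 1]].
pose ub (i : 'I_d) (t : 'I_r) : 'cV[bool]_n := \col_a (U (RR i a) t == 1).
pose W (i : 'I_d) := [set ub i t | t in T i].
have Hspan : forall i g (y : 'cV[int]_n), (forall a, y a 0 = A2 (RR i a) g) ->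
    (forall a, y a 0 <= 1) -> bspans (W i) y.
  move=> i g y yE y1.
  pose J := [set t | (t \in T i) && (V t g == 1)].
  have [S SJ Sy] : bspans (ub i @: J) y.
    apply: span_img => //; apply/matrixP => a b; rewrite (ord1 b) yE E mxE summxE.
    rewrite [RHS]big_mkcond; apply: eq_bigr => t _; rewrite !mxE [t \in J]inE.
    case: (Ubin (RR i a) t) => Ue; case: (Vbin t g) => Ve; rewrite Ue Ve ?mulr0 ?mul0r;
      try by case: (t \in T i).
    rewrite mulr1; have -> : t \in T i.
      by rewrite inE; apply/andP; split; apply/existsP; [exists a | exists g]; rewrite ?Ue ?Ve.
    by rewrite eqxx.
  exists S => //; apply: (subset_trans SJ); apply: imsetS.
  by apply/subsetP => t; rewrite inE => /andP[].
have HW : forall i, (k < #|W i|)%N.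
  move=> i; apply: (block_bound Arank s1 s2 ne12).
  - move=> c; apply: (Hspan i (lshift _ (RR i c))).
      by move=> a; rewrite AsE1 eqxx mxE.
    by move=> a; rewrite mxE; case: (Abin a c) => ->.
  - move=> j; apply: (Hspan i (rshift _ (RR i (lshift k j)))).
      by move=> a; rewrite AsE2 eqxx row_mxEl !mxE.
    by move=> a; rewrite !mxE; case: (U1 a j).
  - move=> j; apply: (Hspan i (rshift _ (RR i (rshift k j)))).
      by move=> a; rewrite AsE2 eqxx row_mxEr !mxE.
    by move=> a; rewrite !mxE; case: (U2 a j).
have HT : forall i, (k < #|T i|)%N.
  by move=> i; apply: (leq_trans (HW i)); apply: leq_imset_card.
have Hsum : (\sum_(i < d) #|T i| <= r)%N.
  have -> : (\sum_(i < d) #|T i| = \sum_(t < r) #|[set i | t \in T i]|)%N.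
    under eq_bigr => i _ do rewrite -sum1_card big_mkcond /=.
    rewrite exchange_big /=; apply: eq_bigr => t _.
    by rewrite -big_mkcond /= -sum1_card; apply: eq_bigl => i; rewrite inE.
  rewrite -[X in (_ <= X)%N]card_ord -sum1_card.
  apply: leq_sum => t _; apply/card_le1_eqP => i j.
  rewrite !inE => /andP [/existsP [a Ha] /existsP [g Hg]] /andP [/existsP [a' Ha'] _].
  have h1 := offblk (pos _ _ _ (eqP Ha) (eqP Hg)).
  have h2 := offblk (pos _ _ _ (eqP Ha') (eqP Hg)).
  by rewrite -h1 -h2.
apply: leq_trans Hsum.
have -> : (k * d + d = \sum_(i < d) k.+1)%N.
  by rewrite sum_nat_const card_ord; lia.
exact: leq_sum.
Qed.
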